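(* Let $X$ be a uniformly smooth Banach space and let $\{S_i\}_{i=1}^\infty$ be a family of nonempty subsets of $X$ such that $a\in\bigcap_{i=1}^\infty\operatorname{conv} S_i$ and $D=\sup_i\operatorname{diam} S_i<\infty$. Then there exists a sequence $\{x_i\}_{i=1}^\infty$ with $x_i\in S_i$ for every $i$ such that, for every $k\in\mathbb{N}$, the vector $a_k=\frac1k\sum_{i=1}^k x_i$ satisfies $$\|a-a_k\|\le \frac{2e^2}{k\,\rho_X^{-1}(1/k)}\,D .$$
   Context: The modulus of smoothness of a Banach space $X$ is $\rho_X(\tau)=\sup\{\tfrac12(\|x+\tau y\|+\|x-\tau y\|)-1 : \|x\|=\|y\|=1\}$ for $\tau\ge 0$. $X$ is uniformly smooth if $\rho_X(t)=o(t)$ as $t\to0$. The function $\rho_X$ is convex, strictly increasing and continuous on $[0,\infty)$, with $\rho_X(0)=0$, and it satisfies $\sqrt{1+\tau^2}-1\le\rho_X(\tau)$. Consequently it is a bijection of $[0,\infty)$ onto itself, and $\rho_X^{-1}$ denotes its inverse function. $\operatorname{conv}$ denotes the convex hull, and $\operatorname{diam} S=\sup_{x,y\in S}\|x-y\|$. *)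

(* Defs.v *)
From Stdlib Require Import Reals Lra List ClassicalEpsilon.
Open Scope R_scope.

Record NormedSpace := {
  V :> Type;
  vadd : V -> V -> V;
  vzero : V;
  vopp : V -> V;
  vscal : R -> V -> V;
  vnorm : V -> R;
  vadd_assoc : forall x y z, vadd x (vadd y z) = vadd (vadd x y) z;
  vadd_comm : forall x y, vadd x y = vadd y x;
  vadd_0l : forall x, vadd vzero x = x;
  vadd_oppr : forall x, vadd x (vopp x) = vzero;
  vscal_addr : forall c x y, vscal c (vadd x y) = vadd (vscal c x) (vscal c y);
  vscal_addl : forall c d x, vscal (c + d) x = vadd (vscal c x) (vscal d x);
  vscal_assoc : forall c d x, vscal c (vscal d x) = vscal (c * d) x;
  vscal_1 : forall x, vscal 1 x = x;
  vnorm_eq0 : forall x, vnorm x = 0 -> x = vzero;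
  vnorm_scal : forall c x, vnorm (vscal c x) = Rabs c * vnorm x;
  vnorm_triangle : forall x y, vnorm (vadd x y) <= vnorm x + vnorm y
}.

Arguments vadd {_}. Arguments vzero {_}. Arguments vopp {_}.
Arguments vscal {_}. Arguments vnorm {_}.

Definition vsub {X : NormedSpace} (x y : X) : X := vadd x (vopp y).

Definition Banach (X : NormedSpace) : Prop :=
  forall u : nat -> X,
    (forall eps, 0 < eps -> exists N, forall m n, (N <= m)%nat -> (N <= n)%nat ->
        vnorm (vsub (u m) (u n)) < eps) ->
    exists l : X, forall eps, 0 < eps -> exists N, forall n, (N <= n)%nat ->
        vnorm (vsub (u n) l) < eps.

(* Supremum of a set of reals (0 if empty or unbounded; only used where it exists). *)
Definition Rsup_set (E : R -> Prop) : R :=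
  match excluded_middle_informative (bound E /\ exists r, E r) with
  | left H => proj1_sig (completeness E (proj1 H) (proj2 H))
  | right _ => 0
  end.

Definition smooth_set (X : NormedSpace) (tau : R) (r : R) : Prop :=
  exists x y : X, vnorm x = 1 /\ vnorm y = 1 /\
    r = (vnorm (vadd x (vscal tau y)) + vnorm (vsub x (vscal tau y))) / 2 - 1.

Definition rho (X : NormedSpace) (tau : R) : R := Rsup_set (smooth_set X tau).

Definition rho_inv (X : NormedSpace) (s : R) : R :=
  epsilon (inhabits 0) (fun t => 0 <= t /\ rho X t = s).

Definition uniformly_smooth (X : NormedSpace) : Prop :=
  forall eps, 0 < eps -> exists delta, 0 < delta /\
    forall t, 0 < t -> t < delta -> rho X t <= eps * t.

Definition vsum {X : NormedSpace} (l : list X) : X := fold_right vadd vzero l.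

Fixpoint psum {X : NormedSpace} (x : nat -> X) (k : nat) : X :=
  match k with
  | O => vzero
  | S k' => vadd (psum x k') (x k')
  end.

Definition conv {X : NormedSpace} (S : X -> Prop) (a : X) : Prop :=
  exists l : list (R * X),
    Forall (fun p => 0 <= fst p /\ S (snd p)) l /\
    fold_right Rplus 0 (map fst l) = 1 /\
    a = vsum (map (fun p => vscal (fst p) (snd p)) l).

Definition diam {X : NormedSpace} (S : X -> Prop) : R :=
  Rsup_set (fun r => exists x y, S x /\ S y /\ r = vnorm (vsub x y)).

(* Main.v *)
Require Import Defs.
From Stdlib Require Import Reals Lra Lia List ClassicalEpsilon Classical.
Open Scope R_scope.

Lemma vadd_0r {X : NormedSpace} (x : X) : vadd x vzero = x.
Proof. rewrite vadd_comm; apply vadd_0l. Qed.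

Lemma vadd_cancel_l {X : NormedSpace} (x y z : X) : vadd x y = vadd x z -> y = z.
Proof.
  intro H. apply (f_equal (vadd (vopp x))) in H.
  rewrite !vadd_assoc in H. rewrite (vadd_comm _ (vopp x) x), vadd_oppr, !vadd_0l in H. exact H.
Qed.

Lemma vscal_0l {X : NormedSpace} (x : X) : vscal 0 x = vzero.
Proof.
  apply (vadd_cancel_l (vscal 0 x)). rewrite vadd_0r, <- vscal_addl. f_equal; ring.
Qed.

Lemma vscal_0r {X : NormedSpace} (c : R) : vscal c (@vzero X) = vzero.
Proof. rewrite <- (vscal_0l vzero) at 1. rewrite vscal_assoc, Rmult_0_r. apply vscal_0l. Qed.

Lemma vopp_scal {X : NormedSpace} (x : X) : vopp x = vscal (-1) x.
Proof.
  apply (vadd_cancel_l x). rewrite vadd_oppr. rewrite <- (vscal_1 _ x) at 1.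
  rewrite <- vscal_addl. replace (1 + -1) with 0 by ring. now rewrite vscal_0l.
Qed.

Lemma vnorm_0 {X : NormedSpace} : vnorm (@vzero X) = 0.
Proof. rewrite <- (vscal_0l vzero), vnorm_scal, Rabs_R0. ring. Qed.

Lemma vnorm_opp {X : NormedSpace} (x : X) : vnorm (vopp x) = vnorm x.
Proof. rewrite vopp_scal, vnorm_scal. replace (Rabs (-1)) with 1 by (rewrite Rabs_left; lra). ring. Qed.

Lemma vnorm_ge0 {X : NormedSpace} (x : X) : 0 <= vnorm x.
Proof.
  pose proof (vnorm_triangle _ x (vopp x)) as H. rewrite vadd_oppr, vnorm_0, vnorm_opp in H. lra.
Qed.

Lemma vscal_oppl {X : NormedSpace} (c : R) (x : X) : vscal (-c) x = vopp (vscal c x).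
Proof. rewrite vopp_scal, vscal_assoc. f_equal; ring. Qed.

Lemma vscal_opp {X : NormedSpace} (c : R) (x : X) : vscal c (vopp x) = vopp (vscal c x).
Proof. rewrite !vopp_scal, !vscal_assoc. f_equal; ring. Qed.

Lemma vopp_add {X : NormedSpace} (x y : X) : vopp (vadd x y) = vadd (vopp x) (vopp y).
Proof. rewrite !vopp_scal. apply vscal_addr. Qed.

Lemma vopp_opp {X : NormedSpace} (x : X) : vopp (vopp x) = x.
Proof. rewrite !vopp_scal, vscal_assoc. replace (-1 * -1) with 1 by ring. apply vscal_1. Qed.

Lemma comb4 {X : NormedSpace} (a b c d : X) : vadd (vadd a b) (vadd c d) = vadd (vadd a c) (vadd b d).
Proof.
  rewrite <- !vadd_assoc. f_equal. rewrite !vadd_assoc. f_equal. apply vadd_comm.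
Qed.

Lemma vnorm_eq0_iff {X : NormedSpace} (x : X) : vnorm x = 0 -> x = vzero.
Proof. apply vnorm_eq0. Qed.

Lemma Rsup_lub (E : R -> Prop) : bound E -> (exists r, E r) -> is_lub E (Rsup_set E).
Proof.
  intros Hb He. unfold Rsup_set.
  destruct (excluded_middle_informative (bound E /\ exists r, E r)) as [H|H].
  - destruct (completeness E (proj1 H) (proj2 H)) as [m Hm]. exact Hm.
  - exfalso; tauto.
Qed.

Lemma norm_comb {X : NormedSpace} (l m : R) (p q : X) :
  vnorm (vadd (vscal l p) (vscal m q)) <= Rabs l * vnorm p + Rabs m * vnorm q.
Proof. rewrite <- !vnorm_scal. apply vnorm_triangle. Qed.

Lemma smooth_bound {X : NormedSpace} tau r : smooth_set X tau r -> r <= Rabs tau.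
Proof.
  intros (x & y & Hx & Hy & ->).
  pose proof (vnorm_triangle _ x (vscal tau y)) as H1.
  pose proof (vnorm_triangle _ x (vopp (vscal tau y))) as H2.
  unfold vsub. rewrite vnorm_opp, vnorm_scal in *. rewrite Hx, Hy in *. lra.
Qed.

Lemma smooth_ne {X : NormedSpace} (e : X) tau : vnorm e = 1 ->
  smooth_set X tau ((Rabs (1 + tau) + Rabs (1 - tau)) / 2 - 1).
Proof.
  intro He. exists e, e. split; [exact He|]. split; [exact He|].
  assert (E1 : vadd e (vscal tau e) = vscal (1 + tau) e).
  { rewrite vscal_addl, vscal_1. reflexivity. }
  assert (E2 : vsub e (vscal tau e) = vscal (1 - tau) e).
  { unfold vsub. rewrite <- vscal_oppl. unfold Rminus. rewrite vscal_addl, vscal_1. reflexivity. }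
  rewrite E1, E2, !vnorm_scal, He. f_equal. f_equal. ring.
Qed.

Lemma rho_lub {X : NormedSpace} (e : X) tau : vnorm e = 1 -> is_lub (smooth_set X tau) (rho X tau).
Proof.
  intro He. apply Rsup_lub.
  - exists (Rabs tau). intros r Hr. now apply smooth_bound in Hr.
  - eexists; exact (smooth_ne e tau He).
Qed.

Lemma rho_le_abs {X : NormedSpace} (e : X) tau : vnorm e = 1 -> rho X tau <= Rabs tau.
Proof.
  intro He. apply (proj2 (rho_lub e tau He)). intros r Hr. now apply smooth_bound in Hr.
Qed.

Lemma rho_ge {X : NormedSpace} (e : X) tau : vnorm e = 1 ->
  0 <= rho X tau /\ Rabs tau - 1 <= rho X tau.
Proof.
  intro He. pose proof (proj1 (rho_lub e tau He) _ (smooth_ne e tau He)) as H.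
  unfold Rabs in *.
  destruct (Rcase_abs (1 + tau)); destruct (Rcase_abs (1 - tau)); destruct (Rcase_abs tau); lra.
Qed.

Lemma rho_elem {X : NormedSpace} (x y : X) tau : vnorm x = 1 -> vnorm y = 1 ->
  (vnorm (vadd x (vscal tau y)) + vnorm (vsub x (vscal tau y))) / 2 - 1 <= rho X tau.
Proof.
  intros Hx Hy. apply (proj1 (rho_lub x tau Hx)). exists x, y. auto.
Qed.

Lemma rho0 {X : NormedSpace} (e : X) : vnorm e = 1 -> rho X 0 = 0.
Proof.
  intro He. pose proof (rho_le_abs e 0 He). pose proof (rho_ge e 0 He). rewrite Rabs_R0 in *. lra.
Qed.

Lemma f_mono {X : NormedSpace} (x y : X) s t : 0 <= s <= t ->
  vnorm (vadd x (vscal s y)) + vnorm (vsub x (vscal s y)) <=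
  vnorm (vadd x (vscal t y)) + vnorm (vsub x (vscal t y)).
Proof.
  intros Hst. destruct (Req_dec t 0) as [Ht|Ht].
  { assert (s = 0) by lra. subst. lra. }
  set (l := (t + s) / (2 * t)).
  assert (Hl0 : 0 <= l) by (unfold l; apply Rmult_le_pos; [lra| left; apply Rinv_0_lt_compat; lra]).
  assert (Hl1 : l <= 1).
  { unfold l. apply (Rmult_le_reg_r (2*t)); [lra|]. unfold Rdiv. rewrite Rmult_assoc, Rinv_l by lra. lra. }
  set (A := vadd x (vscal t y)). set (B := vsub x (vscal t y)).
  assert (G : forall c d : R, vadd (vscal c A) (vscal d B) = vadd (vscal (c + d) x) (vscal (c * t - d * t) y)).
  { intros c d. unfold A, B, vsub. rewrite !vscal_addr, <- vscal_oppl, !vscal_assoc, comb4.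
    rewrite <- !vscal_addl. f_equal; f_equal; ring. }
  assert (E1 : vadd x (vscal s y) = vadd (vscal l A) (vscal (1 - l) B)).
  { rewrite G. replace (l + (1 - l)) with 1 by ring. rewrite vscal_1. f_equal. f_equal.
    unfold l. field. exact Ht. }
  assert (E2 : vsub x (vscal s y) = vadd (vscal (1 - l) A) (vscal l B)).
  { rewrite G. replace (1 - l + l) with 1 by ring. rewrite vscal_1. unfold vsub. f_equal.
    rewrite <- vscal_oppl. f_equal. unfold l. field. exact Ht. }
  rewrite E1, E2.
  pose proof (norm_comb l (1 - l) A B). pose proof (norm_comb (1 - l) l A B).
  rewrite (Rabs_pos_eq l), (Rabs_pos_eq (1 - l)) in * by lra.
  fold A B. nra.
Qed.

Lemma rho_mono {X : NormedSpace} (e : X) s t : vnorm e = 1 -> 0 <= s <= t -> rho X s <= rho X t.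
Proof.
  intros He Hst. apply (proj2 (rho_lub e s He)). intros r (x & y & Hx & Hy & ->).
  pose proof (f_mono x y s t Hst). pose proof (rho_elem x y t Hx Hy). lra.
Qed.

Lemma rho_lip {X : NormedSpace} (e : X) s t : vnorm e = 1 -> rho X t <= rho X s + Rabs (t - s).
Proof.
  intros He. assert (H : forall r, smooth_set X t r -> r <= rho X s + Rabs (t - s)).
  { intros r (x & y & Hx & Hy & ->). pose proof (rho_elem x y s Hx Hy).
    assert (E1 : vadd x (vscal t y) = vadd (vadd x (vscal s y)) (vscal (t - s) y)).
    { rewrite <- vadd_assoc, <- vscal_addl. f_equal. f_equal. ring. }
    assert (E2 : vsub x (vscal t y) = vadd (vsub x (vscal s y)) (vscal (-(t - s)) y)).
    { unfold vsub. rewrite <- vadd_assoc, <- !vscal_oppl, <- vscal_addl. f_equal. f_equal. ring. }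
    pose proof (vnorm_triangle _ (vadd x (vscal s y)) (vscal (t - s) y)).
    pose proof (vnorm_triangle _ (vsub x (vscal s y)) (vscal (-(t - s)) y)).
    rewrite <- E1 in *. rewrite <- E2 in *. rewrite !vnorm_scal, Hy, Rabs_Ropp in *. lra. }
  apply (proj2 (rho_lub e t He)). exact H.
Qed.

Lemma rho_cont {X : NormedSpace} (e : X) : vnorm e = 1 -> continuity (rho X).
Proof.
  intros He x eps Heps. exists eps. split; [exact Heps|].
  intros y [_ Hy]. simpl in *. unfold R_dist in *.
  pose proof (rho_lip e x y He). pose proof (rho_lip e y x He).
  rewrite Rabs_minus_sym in H0.
  unfold Rabs in *. destruct (Rcase_abs (rho X y - rho X x)); destruct (Rcase_abs (y - x)); lra.
Qed.

Lemma rho_inv_spec {X : NormedSpace} (e : X) s : vnorm e = 1 -> 0 < s ->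
  0 <= rho_inv X s /\ rho X (rho_inv X s) = s.
Proof.
  intros He Hs. unfold rho_inv. apply epsilon_spec.
  destruct (IVT (fun t => rho X t - s) 0 (s + 2)) as [z [Hz1 Hz2]].
  - intro t. apply continuity_pt_minus; [apply rho_cont with e; exact He| apply continuity_pt_const; intros ??; reflexivity].
  - lra.
  - rewrite (rho0 e He). lra.
  - pose proof (rho_ge e (s + 2) He). rewrite Rabs_pos_eq in H by lra. lra.
  - exists z. split; [lra|]. simpl in Hz2. lra.
Qed.

Lemma unit_of {X : NormedSpace} (u : X) : 0 < vnorm u -> vnorm (vscal (/ vnorm u) u) = 1.
Proof. intro H. rewrite vnorm_scal, Rabs_pos_eq by (left; apply Rinv_0_lt_compat; lra). field. lra. Qed.

Lemma key {X : NormedSpace} (u z : X) D : 0 < vnorm u -> vnorm z <= D ->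
  vnorm (vadd u z) + vnorm (vsub u z) <= 2 * vnorm u * (1 + rho X (D / vnorm u)).
Proof.
  intros Hu Hz. set (e := vscal (/ vnorm u) u). assert (He : vnorm e = 1) by (apply unit_of; exact Hu).
  assert (HD : 0 <= D / vnorm u).
  { unfold Rdiv. apply Rmult_le_pos; [pose proof (vnorm_ge0 z); lra| left; apply Rinv_0_lt_compat; lra]. }
  pose proof (rho_ge e (D / vnorm u) He) as [Hr0 _].
  destruct (Req_dec (vnorm z) 0) as [Hz0|Hz0].
  { apply vnorm_eq0 in Hz0. subst z. unfold vsub. rewrite vopp_scal, vscal_0r, vadd_0r. nra. }
  assert (Hzp : 0 < vnorm z) by (pose proof (vnorm_ge0 z); lra).
  set (y := vscal (/ vnorm z) z). assert (Hy : vnorm y = 1) by (apply unit_of; exact Hzp).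
  set (s := vnorm z / vnorm u).
  assert (Hs : 0 <= s <= D / vnorm u).
  { unfold s. split. { unfold Rdiv. apply Rmult_le_pos; [lra| left; apply Rinv_0_lt_compat; lra]. }
    unfold Rdiv. apply Rmult_le_compat_r; [left; apply Rinv_0_lt_compat; lra| lra]. }
  pose proof (rho_elem e y s He Hy) as H1.
  pose proof (rho_mono e s (D / vnorm u) He Hs) as H2.
  assert (Ey : vscal s y = vscal (/ vnorm u) z).
  { unfold y, s. rewrite vscal_assoc. f_equal. field. split; lra. }
  assert (E1 : vadd e (vscal s y) = vscal (/ vnorm u) (vadd u z)).
  { rewrite Ey, vscal_addr. reflexivity. }
  assert (E2 : vsub e (vscal s y) = vscal (/ vnorm u) (vsub u z)).
  { rewrite Ey. unfold vsub. rewrite vscal_addr, vscal_opp. reflexivity. }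
  rewrite E1, E2, !vnorm_scal, Rabs_pos_eq in H1 by (left; apply Rinv_0_lt_compat; lra).
  assert (H3 : / vnorm u * (vnorm (vadd u z) + vnorm (vsub u z)) <= 2 * (1 + rho X (D / vnorm u))) by lra.
  apply (Rmult_le_compat_l (vnorm u)) in H3; [|lra].
  rewrite <- Rmult_assoc, Rinv_r in H3 by lra. lra.
Qed.

Definition ws {X : NormedSpace} (l : list (R * X)) (h : X -> R) : R :=
  fold_right Rplus 0 (map (fun p => fst p * h (snd p)) l).

Lemma ws_le {X : NormedSpace} (l : list (R * X)) f g :
  (forall q, In q l -> 0 <= fst q) -> (forall q, In q l -> f (snd q) <= g (snd q)) -> ws l f <= ws l g.
Proof.
  induction l as [|p l IH]; intros H1 H2; [unfold ws; simpl; lra|].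
  assert (0 <= fst p) by (apply H1; left; auto). assert (f (snd p) <= g (snd p)) by (apply H2; left; auto).
  assert (ws l f <= ws l g) by (apply IH; intros; [apply H1|apply H2]; right; auto).
  unfold ws in *. simpl. nra.
Qed.

Lemma ws_const {X : NormedSpace} (l : list (R * X)) C :
  ws l (fun _ => C) = C * fold_right Rplus 0 (map fst l).
Proof. unfold ws in *. induction l as [|p l IH]; simpl; [ring|]. rewrite IH. ring. Qed.

Lemma ws_lin {X : NormedSpace} (l : list (R * X)) C g :
  ws l (fun y => C - g y) = C * fold_right Rplus 0 (map fst l) - ws l g.
Proof. unfold ws in *. induction l as [|p l IH]; simpl; [ring|]. rewrite IH. ring. Qed.

Lemma list_min {X : NormedSpace} (l : list (R * X)) (f : X -> R) : l <> nil ->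
  exists p, In p l /\ forall q, In q l -> f (snd p) <= f (snd q).
Proof.
  induction l as [|p l IH]; intro Hn; [congruence|].
  destruct l as [|p' l'].
  - exists p. split; [left; auto|]. intros q [<-|[]]. lra.
  - destruct IH as [m [Hm1 Hm2]]; [discriminate|].
    destruct (Rle_dec (f (snd p)) (f (snd m))).
    + exists p. split; [left; auto|]. intros q [<-|Hq]; [lra|]. specialize (Hm2 q Hq). lra.
    + exists m. split; [right; auto|]. intros q [<-|Hq]; [lra|]. auto.
Qed.

Lemma ws_min {X : NormedSpace} (l : list (R * X)) (P : X -> Prop) f :
  Forall (fun p => 0 <= fst p /\ P (snd p)) l -> fold_right Rplus 0 (map fst l) = 1 ->
  exists y, P y /\ f y <= ws l f.
Proof.
  intros HF Hs. rewrite Forall_forall in HF.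
  destruct (list_min l f) as [p [Hp1 Hp2]]. { intros ->. simpl in Hs. lra. }
  exists (snd p). split; [apply HF; auto|].
  pose proof (ws_le l (fun _ => f (snd p)) f) as H.
  rewrite ws_const, Hs in H. rewrite Rmult_1_r in H. apply H; [intros; apply HF; auto| auto].
Qed.

Lemma vsum_shift {X : NormedSpace} (l : list (R * X)) (c : X) :
  vsum (map (fun p => vscal (fst p) (vadd (snd p) c)) l) =
  vadd (vsum (map (fun p => vscal (fst p) (snd p)) l)) (vscal (fold_right Rplus 0 (map fst l)) c).
Proof.
  induction l as [|p l IH]; simpl.
  - rewrite vscal_0l, vadd_0l. reflexivity.
  - unfold vsum in *. simpl. rewrite IH, vscal_addr, vscal_addl. apply comb4.
Qed.

Lemma vsum_norm {X : NormedSpace} (l : list (R * X)) (g : X -> X) :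
  (forall q, In q l -> 0 <= fst q) ->
  vnorm (vsum (map (fun p => vscal (fst p) (g (snd p))) l)) <= ws l (fun y => vnorm (g y)).
Proof.
  induction l as [|p l IH]; intro H; simpl.
  - rewrite vnorm_0. unfold ws; simpl; lra.
  - pose proof (vnorm_triangle _ (vscal (fst p) (g (snd p))) (vsum (map (fun p => vscal (fst p) (g (snd p))) l))).
    rewrite vnorm_scal, Rabs_pos_eq in H0 by (apply H; left; auto).
    assert (vnorm (vsum (map (fun p => vscal (fst p) (g (snd p))) l)) <= ws l (fun y => vnorm (g y)))
      by (apply IH; intros; apply H; right; auto).
    unfold vsum in *. unfold ws in *. simpl. lra.
Qed.

Lemma exp_pow_n y n : exp y ^ n = exp (INR n * y).
Proof.
  induction n as [|n IH]; simpl.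
  - rewrite Rmult_0_l, exp_0. reflexivity.
  - rewrite IH. rewrite <- exp_plus. f_equal. destruct n; simpl; ring.
Qed.

Lemma numeric (b : nat -> R) (r : R -> R) D k tau : 0 <= D -> b 0%nat = 0 -> (forall n, 0 <= b n) ->
  (forall n, b (S n) <= b n + D) ->
  (forall n, 0 < b n -> b (S n) <= b n * (1 + 2 * r (D / b n))) ->
  (forall s t, 0 <= s <= t -> r s <= r t) -> (1 <= k)%nat -> 0 < tau -> r tau = / INR k ->
  tau <= 1 + / INR k -> b k <= 2 * exp 1 ^ 2 * D / tau.
Proof.
  intros HD0 Hb0 Hbpos Hadd Hmul Hmono Hk Htau Hrt Htau1.
  assert (Hkp : 0 < INR k) by (apply lt_0_INR; lia).
  set (q := 1 + 2 / INR k). set (T := D / tau).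
  assert (HT : 0 <= T) by (unfold T, Rdiv; apply Rmult_le_pos; [lra| left; apply Rinv_0_lt_compat; lra]).
  assert (Hq1 : 1 <= q) by (unfold q, Rdiv; assert (0 < / INR k) by (apply Rinv_0_lt_compat; lra); lra).
  assert (Claim : forall n, (S n <= k)%nat -> b (S n) <= (T + D) * q ^ n).
  { induction n as [|n IH]; intro Hn.
    - simpl. specialize (Hadd 0%nat). rewrite Hb0 in Hadd. lra.
    - destruct (Rle_dec (b (S n)) T) as [Hle|Hgt].
      + pose proof (pow_R1_Rle q (S n) Hq1). specialize (Hadd (S n)).
        assert (0 <= T + D) by lra. nra.
      + assert (Hbp : 0 < b (S n)) by lra.
        assert (HDb : D <= tau * b (S n)).
        { unfold T in Hgt. apply Rnot_le_lt in Hgt.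
          apply (Rmult_lt_compat_l tau) in Hgt; [|lra]. unfold Rdiv in Hgt.
          rewrite <- Rmult_assoc, (Rmult_comm tau D), Rmult_assoc, Rinv_r, Rmult_1_r in Hgt by lra. lra. }
        assert (Hs : 0 <= D / b (S n) <= tau).
        { split. { unfold Rdiv. apply Rmult_le_pos; [lra| left; apply Rinv_0_lt_compat; lra]. }
          apply (Rmult_le_reg_r (b (S n))); [lra|]. unfold Rdiv.
          rewrite Rmult_assoc, Rinv_l, Rmult_1_r by lra. lra. }
        pose proof (Hmono _ _ Hs) as Hr. rewrite Hrt in Hr.
        specialize (Hmul _ Hbp).
        assert (Hle : b (S (S n)) <= b (S n) * q).
        { unfold q. unfold Rdiv. nra. }
        specialize (IH ltac:(lia)). simpl. nra. }
  destruct k as [|m]; [lia|].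
  specialize (Claim m (le_n _)).
  assert (Hqk : q ^ S m <= exp 1 ^ 2).
  { assert (q <= exp (2 / INR (S m))) by (unfold q; apply exp_ineq1_le).
    apply Rle_trans with (exp (2 / INR (S m)) ^ S m).
    { apply pow_incr. lra. }
    rewrite exp_pow_n, exp_pow_n. right. f_equal. replace (INR 2) with 2 by (simpl; ring). field. lra. }
  assert (Hqm : 0 <= q ^ m) by (apply pow_le; lra).
  simpl pow in Hqk.
  assert (H1 : (1 + tau) * q ^ m <= 2 * exp 1 ^ 2).
  { assert (1 + tau <= 2 * q).
    { unfold q, Rdiv. assert (0 < / INR (S m)) by (apply Rinv_0_lt_compat; lra). lra. }
    simpl pow. nra. }
  assert (E : T + D = D * (1 + tau) / tau) by (unfold T; field; lra).
  rewrite E in Claim.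
  apply Rle_trans with (D * (1 + tau) / tau * q ^ m); [exact Claim|].
  unfold Rdiv. assert (0 < / tau) by (apply Rinv_0_lt_compat; lra).
  simpl pow in H1. nra.
Qed.

Lemma conv_dist {X : NormedSpace} (T : X -> Prop) a D (HaT : conv T a)
  (Hd : forall x y, T x -> T y -> vnorm (vsub x y) <= D) y : T y -> vnorm (vsub a y) <= D.
Proof.
  intro Hy. destruct HaT as (l & HF & Hs & Ha).
  assert (E : vsub a y = vsum (map (fun p => vscal (fst p) (vadd (snd p) (vopp y))) l)).
  { rewrite vsum_shift, Hs, vscal_1, <- Ha. reflexivity. }
  rewrite E. rewrite Forall_forall in HF.
  eapply Rle_trans; [apply (vsum_norm l (fun z => vadd z (vopp y))); intros; apply HF; auto|].
  eapply Rle_trans; [apply (ws_le l _ (fun _ => D)); intros; [apply HF; auto|]|].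
  - simpl. apply Hd; [apply HF; auto| exact Hy].
  - rewrite ws_const, Hs. lra.
Qed.

Lemma step {X : NormedSpace} (T : X -> Prop) a D (HaT : conv T a)
  (Hd : forall x y, T x -> T y -> vnorm (vsub x y) <= D) (u : X) :
  exists x, T x /\ (0 < vnorm u -> vnorm (vadd u (vsub a x)) <= vnorm u * (1 + 2 * rho X (D / vnorm u))).
Proof.
  pose proof HaT as (l & HF & Hs & Ha).
  set (h := fun y => vnorm (vadd u (vsub a y))).
  destruct (ws_min l T h HF Hs) as [y [Hy Hhy]].
  exists y. split; [exact Hy|]. intro Hu. fold (h y).
  set (C := 2 * vnorm u * (1 + rho X (D / vnorm u))).
  rewrite Forall_forall in HF.
  assert (H1 : ws l h <= ws l (fun y => C - vnorm (vadd y (vsub u a)))).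
  { apply ws_le; [intros; apply HF; auto|]. intros q Hq. unfold h.
    pose proof (key u (vsub a (snd q)) D Hu (conv_dist T a D HaT Hd (snd q) (proj2 (HF q Hq)))).
    assert (E : vsub u (vsub a (snd q)) = vadd (snd q) (vsub u a)).
    { unfold vsub. rewrite vopp_add, vopp_opp. rewrite (vadd_comm _ (vopp a) (snd q)).
      rewrite vadd_assoc, (vadd_comm _ u (snd q)), <- vadd_assoc. reflexivity. }
    rewrite E in H. unfold C. lra. }
  rewrite ws_lin, Hs in H1.
  assert (H2 : vnorm u <= ws l (fun y => vnorm (vadd y (vsub u a)))).
  { assert (E : u = vsum (map (fun p => vscal (fst p) (vadd (snd p) (vsub u a))) l)).
    { rewrite vsum_shift, Hs, vscal_1, <- Ha. unfold vsub.
      rewrite (vadd_comm _ u), vadd_assoc, vadd_oppr, vadd_0l. reflexivity. }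
    rewrite E at 1. apply (vsum_norm l (fun z => vadd z (vsub u a))). intros; apply HF; auto. }
  unfold C in H1. lra.
Qed.

Lemma main_nt {X : NormedSpace} (e : X) (He : vnorm e = 1) (T : nat -> X -> Prop) (a : X) (D : R)
  (HD0 : 0 <= D) (HaT : forall i, conv (T i) a)
  (Hd : forall i x y, T i x -> T i y -> vnorm (vsub x y) <= D) :
  exists x : nat -> X, (forall i, T i (x i)) /\
    forall k : nat, (1 <= k)%nat ->
      vnorm (vsub a (vscal (/ INR k) (psum x k)))
        <= 2 * exp 1 ^ 2 / (INR k * rho_inv X (/ INR k)) * D.
Proof.
  assert (ch : forall (i : nat) (P : X), {x | T i x /\
     (0 < vnorm (vsub (vscal (INR i) a) P) ->
      vnorm (vadd (vsub (vscal (INR i) a) P) (vsub a x)) <=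
      vnorm (vsub (vscal (INR i) a) P) * (1 + 2 * rho X (D / vnorm (vsub (vscal (INR i) a) P))))}).
  { intros i P. apply constructive_indefinite_description. apply step; [apply HaT| apply Hd]. }
  set (F := nat_rect (fun _ => X) vzero (fun n Fn => vadd Fn (proj1_sig (ch n Fn)))).
  set (x := fun n => proj1_sig (ch n (F n))).
  assert (HF : forall n, psum x n = F n).
  { induction n as [|n IH]; [reflexivity|]. simpl. rewrite IH. reflexivity. }
  exists x. split; [intro i; exact (proj1 (proj2_sig (ch i (F i))))|].
  set (u := fun n => vsub (vscal (INR n) a) (psum x n)).
  assert (Hu0 : u 0%nat = vzero).
  { unfold u. simpl psum. change (INR 0) with 0. rewrite vscal_0l. unfold vsub. apply vadd_oppr. }
  assert (HuS : forall n, u (S n) = vadd (u n) (vsub a (x n))).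
  { intro n. unfold u, vsub. simpl psum. rewrite S_INR, vscal_addl, vscal_1, vopp_add. apply comb4. }
  assert (Hmul : forall n, 0 < vnorm (u n) -> vnorm (u (S n)) <= vnorm (u n) * (1 + 2 * rho X (D / vnorm (u n)))).
  { intros n Hn. rewrite HuS. unfold u in *. rewrite HF in *. exact (proj2 (proj2_sig (ch n (F n))) Hn). }
  assert (Hadd : forall n, vnorm (u (S n)) <= vnorm (u n) + D).
  { intro n. rewrite HuS. eapply Rle_trans; [apply vnorm_triangle|].
    pose proof (conv_dist (T n) a D (HaT n) (Hd n) (x n) (proj1 (proj2_sig (ch n (F n))))). lra. }
  intros k Hk.
  assert (Hkp : 0 < INR k) by (apply lt_0_INR; lia).
  assert (Hik : 0 < / INR k) by (apply Rinv_0_lt_compat; lra).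
  destruct (rho_inv_spec e (/ INR k) He Hik) as [Ht0 Htr].
  set (tau := rho_inv X (/ INR k)) in *.
  assert (Htau : 0 < tau).
  { destruct Ht0 as [|Ht0]; [assumption|]. rewrite <- Ht0, (rho0 e He) in Htr. lra. }
  assert (Htau1 : tau <= 1 + / INR k).
  { pose proof (rho_ge e tau He) as [_ H]. rewrite Rabs_pos_eq in H by lra. lra. }
  pose proof (numeric (fun n => vnorm (u n)) (rho X) D k tau HD0 ltac:(simpl; rewrite Hu0; apply vnorm_0)
     (fun n => vnorm_ge0 _) Hadd Hmul (fun s t H => rho_mono e s t He H) Hk Htau Htr Htau1) as Hb.
  simpl in Hb.
  assert (E : vsub a (vscal (/ INR k) (psum x k)) = vscal (/ INR k) (u k)).
  { unfold u, vsub. rewrite vscal_addr, vscal_assoc, Rinv_l, vscal_1, vscal_opp by lra. reflexivity. }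
  rewrite E, vnorm_scal, Rabs_pos_eq by lra.
  apply Rle_trans with (/ INR k * (2 * exp 1 ^ 2 * D / tau)).
  - apply Rmult_le_compat_l; lra.
  - right. field. split; lra.
Qed.

Theorem corollary1 (X : NormedSpace) (HB : Banach X) (Hus : uniformly_smooth X)
  (S : nat -> X -> Prop) (a : X) (D : R)
  (Hne : forall i, exists x, S i x)
  (Ha : forall i, conv (S i) a)
  (HDdiam : forall i, bound (fun r => exists x y, S i x /\ S i y /\ r = vnorm (vsub x y)))
  (HD : is_lub (fun r => exists i, r = diam (S i)) D) :
  exists x : nat -> X, (forall i, S i (x i)) /\
    forall k : nat, (1 <= k)%nat ->
      vnorm (vsub a (vscal (/ INR k) (psum x k)))
        <= 2 * exp 1 ^ 2 / (INR k * rho_inv X (/ INR k)) * D.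
Proof.
  assert (Hlub : forall i, is_lub (fun r => exists x y, S i x /\ S i y /\ r = vnorm (vsub x y)) (diam (S i))).
  { intro i. apply Rsup_lub; [apply HDdiam|]. destruct (Hne i) as [x0 Hx0]. eexists; exists x0, x0; eauto. }
  assert (Hdiam_le : forall i, diam (S i) <= D) by (intro i; apply (proj1 HD); exists i; reflexivity).
  assert (Hd : forall i x y, S i x -> S i y -> vnorm (vsub x y) <= D).
  { intros i x y Hx Hy. eapply Rle_trans; [|apply Hdiam_le]. apply (proj1 (Hlub i)). exists x, y; auto. }
  assert (HD0 : 0 <= D).
  { destruct (Hne 0%nat) as [x0 Hx0]. pose proof (Hd _ _ _ Hx0 Hx0). pose proof (vnorm_ge0 (vsub x0 x0)). lra. }
  destruct (classic (exists e : X, vnorm e = 1)) as [[e He]|Hn].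
  - apply (main_nt e He); assumption.
  - assert (Hz : forall v : X, vnorm v = 0).
    { intro v. destruct (Req_dec (vnorm v) 0) as [|Hv]; [assumption|].
      exfalso. apply Hn. exists (vscal (/ vnorm v) v). apply unit_of. pose proof (vnorm_ge0 v). lra. }
    assert (HDz : D = 0).
    { assert (D <= 0).
      { apply (proj2 HD). intros r [i ->]. apply (proj2 (Hlub i)). intros r (x & y & _ & _ & ->).
        rewrite Hz. lra. }
      lra. }
    exists (fun i => proj1_sig (constructive_indefinite_description _ (Hne i))).
    split; [intro i; exact (proj2_sig (constructive_indefinite_description _ (Hne i)))|].
    intros k Hk. rewrite Hz, HDz, Rmult_0_r. lra.
Qed.
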